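(* Let $Q$ be a complete quiver with at least two frozen vertices, and let $j\neq k$ be mutable vertices such that $j$ is cycle-preserving for $Q$ and $k$ is cycle-preserving for $\mu_j(Q)$. If $j$ is neither red nor green in $Q$, then $j$ is red or green in $\mu_k(\mu_j(Q))$.
   Context: A quiver is a finite directed multigraph with no loops and no oriented 2-cycles, whose vertex set is partitioned into mutable and frozen vertices; arrows between two frozen vertices are ignored. $b_{ik}$ = number of arrows $i\to k$ minus number of arrows $k\to i$; $Q|_S$ is the induced subquiver on $S$. Mutation $\mu_j$ at mutable $j$: for each path $i\to j\to k$ add $b_{ij}b_{jk}$ arrows $i\to k$, reverse all arrows at $j$, cancel 2-cycles. Complete: at least one arrow between every pair of vertices at least one of which is mutable. A 3-vertex (sub)quiver is an oriented 3-cycle if it has at most one frozen vertex and its underlying directed graph is not acyclic. A mutable vertex $j$ is cycle-preserving for $Q$ if whenever $Q|_{\{i,j,k\}}$ is an oriented 3-cycle containing $j$, so is $\mu_j(Q)|_{\{i,j,k\}}$. A mutable vertex adjacent to at least one frozen vertex is red (resp. green) if all arrows between it and frozen vertices point towards (resp. away from) it. *)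

(* Defs.v *)
From mathcomp Require Import all_boot all_order all_algebra.
Set Implicit Arguments. Unset Strict Implicit. Unset Printing Implicit Defensive.
Import Order.TTheory GRing.Theory Num.Theory.
Local Open Scope ring_scope.

(* A quiver on the finite vertex type V with frozen set fr is encoded by its
   signed arrow count B i k = b_ik = #(i -> k) - #(k -> i).  Since a quiver
   has no loops and no oriented 2-cycles, B determines the quiver, and B is
   skew-symmetric.  Vertices not in fr are mutable. *)
Definition is_quiver (V : finType) (B : V -> V -> int) : Prop :=
  forall i k, B i k = - B k i.

Definition narr (V : finType) (B : V -> V -> int) (i k : V) : int :=
  Num.max (B i k) 0.

(* Mutation at j: for each path i -> j -> k add b_ij b_jk arrows i -> k,
   reverse all arrows at j, cancel 2-cycles. *)
Definition mu (V : finType) (j : V) (B : V -> V -> int) : V -> V -> int :=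
  fun i k =>
    if (i == j) || (k == j) then - B i k
    else B i k + narr B i j * narr B j k - narr B k j * narr B j i.

Definition complete (V : finType) (fr : {set V}) (B : V -> V -> int) : Prop :=
  forall i k, i != k -> (i \notin fr) || (k \notin fr) -> B i k != 0.

(* Q|_{i,j,k} is an oriented 3-cycle: three distinct vertices, at most one
   frozen, and the induced directed graph is not acyclic (for three vertices
   in a quiver without loops and 2-cycles, this means it is a directed
   3-cycle in one of the two orientations). *)
Definition oriented3cycle (V : finType) (fr : {set V}) (B : V -> V -> int)
  (i j k : V) : Prop :=
  [/\ i != j, j != k, i != k,
      (#|[set x in [:: i; j; k] | x \in fr]| <= 1)%N &
      (0 < B i j /\ 0 < B j k /\ 0 < B k i) \/
      (0 < B i k /\ 0 < B k j /\ 0 < B j i)].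

Definition cycle_preserving (V : finType) (fr : {set V}) (B : V -> V -> int)
  (j : V) : Prop :=
  j \notin fr /\
  forall i k, oriented3cycle fr B i j k -> oriented3cycle fr (mu j B) i j k.

Definition red (V : finType) (fr : {set V}) (B : V -> V -> int) (j : V) : Prop :=
  [/\ j \notin fr, exists2 f, f \in fr & B j f != 0 &
      forall f, f \in fr -> B j f <= 0].

Definition green (V : finType) (fr : {set V}) (B : V -> V -> int) (j : V) : Prop :=
  [/\ j \notin fr, exists2 f, f \in fr & B j f != 0 &
      forall f, f \in fr -> 0 <= B j f].

(* Main.v *)
Require Import Defs.
From mathcomp Require Import all_boot all_order all_algebra.
From mathcomp Require Import zify ring lra.
Import Order.TTheory GRing.Theory Num.Theory.
Local Open Scope ring_scope.

Lemma narr_pos (V : finType) (B : V -> V -> int) i k : 0 < B i k -> narr B i k = B i k.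
Proof. by move=> h; rewrite /narr; apply/max_idPl; rewrite ltW. Qed.

Lemma narr_npos (V : finType) (B : V -> V -> int) i k : B i k <= 0 -> narr B i k = 0.
Proof. by move=> h; rewrite /narr; apply/max_idPr. Qed.

Lemma narr_ge0 (V : finType) (B : V -> V -> int) i k : 0 <= narr B i k.
Proof. by rewrite /narr le_max lexx orbT. Qed.

Lemma mu_quiver (V : finType) (B : V -> V -> int) j :
  is_quiver B -> is_quiver (mu j B).
Proof.
move=> hB i k; rewrite /mu orbC.
case: ifP => _; first by rewrite (hB i k).
rewrite (hB i k); ring.
Qed.

Lemma muJ (V : finType) (B : V -> V -> int) j h : mu j B j h = - B j h.
Proof. by rewrite /mu eqxx. Qed.
Lemma muJ' (V : finType) (B : V -> V -> int) j h : mu j B h j = - B h j.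
Proof. by rewrite /mu eqxx orbT. Qed.
Lemma muO (V : finType) (B : V -> V -> int) j h k : h != j -> k != j ->
  mu j B h k = B h k + narr B h j * narr B j k - narr B k j * narr B j h.
Proof. by move=> /negPf h1 /negPf h2; rewrite /mu h1 h2. Qed.

Lemma card_le1 (V : finType) (fr : {set V}) (s : seq V) h :
  (forall x, x \in s -> x \in fr -> x = h) -> (#|[set x in s | x \in fr]| <= 1)%N.
Proof.
move=> H; apply: (leq_trans (n := #|[set h]|)); last by rewrite cards1.
apply: subset_leq_card; apply/subsetP => x; rewrite !inE => /andP[xs xf].
by rewrite (H x xs xf).
Qed.

Theorem mainTheorem7 (V : finType) (fr : {set V}) (B : V -> V -> int) (j k : V) :
  is_quiver B ->
  complete fr B ->
  (2 <= #|fr|)%N ->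
  j \notin fr -> k \notin fr -> j != k ->
  cycle_preserving fr B j ->
  cycle_preserving fr (mu j B) k ->
  ~ red fr B j -> ~ green fr B j ->
  red fr (mu k (mu j B)) j \/ green fr (mu k (mu j B)) j.
Proof.
move=> hB hC hfr jf kf jk [_ pj] [_ pk] _ _.
set C := mu j B. set D := mu k C.
have hCq : is_quiver C by exact: mu_quiver.
have hDq : is_quiver D by exact: mu_quiver.
have [h0 h0f] : exists h, h \in fr.
  by apply/card_gt0P; apply: leq_trans hfr.
have kj : k != j by rewrite eq_sym.
have frne h : h \in fr -> (h != j) * (h != k).
  by move=> hf; split; apply/eqP => e; [move: jf | move: kf]; rewrite -e hf.
have bjk : B j k != 0 by apply: hC => //; rewrite jf.
have bjh h : h \in fr -> B j h != 0.
  by move=> hf; apply: hC => //; [rewrite eq_sym (frne h hf).1 | rewrite jf].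
have cnt1 a b c h : h \in fr -> (forall x, x \in [:: a; b; c] -> x \in fr -> x = h) ->
  (#|[set x in [:: a; b; c] | x \in fr]| <= 1)%N.
  by move=> _ H; apply: card_le1 H.
have uniqfr h x : x \in [:: h; j; k] -> x \in fr -> x = h.
  by rewrite !inE => /or3P[/eqP->|/eqP->|/eqP->] //; rewrite ?(negPf jf) ?(negPf kf).
have uniqfr' h x : x \in [:: j; k; h] -> x \in fr -> x = h.
  by rewrite !inE => /or3P[/eqP->|/eqP->|/eqP->] //; rewrite ?(negPf jf) ?(negPf kf).
have Cjk : C j k = - B j k by rewrite /C muJ.
have Ckj : C k j = - B k j by rewrite /C muJ'.
have Cjh h : C j h = - B j h by rewrite /C muJ.
have Dj h : h \in fr -> D j h = C j h + narr C j k * narr C k h - narr C h k * narr C k j.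
  by move=> hf; rewrite /D muO // (frne h hf).2.
have Ch h : h \in fr -> C h k = B h k + narr B h j * narr B j k - narr B k j * narr B j h.
  by move=> hf; rewrite /C muO // (frne h hf).1.
have Dhj h : h \in fr -> D h j = - D j h by move=> _; rewrite (hDq h j).
have Chj h : C h j = - B h j by rewrite /C muJ'.
have Djk : D j k = - C j k by rewrite /D muJ'.
have Dkj : D k j = - C k j by rewrite /D muJ.
have Bjj : B j h0 = B j h0 by [].
have cycB h : h \in fr -> ((0 < B h j /\ 0 < B j k /\ 0 < B k h) \/
                          (0 < B h k /\ 0 < B k j /\ 0 < B j h)) ->
    oriented3cycle fr B h j k.
  move=> hf H; have [hj hk] := frne h hf; split => //.
  exact: card_le1 (uniqfr h).
have cycC h : h \in fr -> ((0 < C j k /\ 0 < C k h /\ 0 < C h j) \/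
                          (0 < C j h /\ 0 < C h k /\ 0 < C k j)) ->
    oriented3cycle fr C j k h.
  move=> hf H; have [hj hk] := frne h hf; split => //; try by rewrite eq_sym.
  exact: card_le1 (uniqfr' h).
have [xpos|xneg] : 0 < B j k \/ B j k < 0.
  by move: bjk; case: ltgtP => //; auto.
- have e1 : narr C j k = 0 by apply: narr_npos; rewrite Cjk oppr_le0 ltW.
  have e2 : narr C k j = B j k by rewrite narr_pos Ckj (hB k j) opprK.
  have key h : h \in fr -> D j h < 0.
    move=> hf; have [hj hk] := frne h hf.
    have := @narr_ge0 _ C h k.
    case: (ltgtP (B j h) 0) => [bneg|bpos|/eqP e]; last by move: (bjh h hf); rewrite e.
    + move=> _.
      have Chk : 0 < C h k.
        rewrite ltNge; apply/negP => Cle.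
        have bhk : B h k < 0.
          have bhj : 0 < B h j by rewrite (hB h j) oppr_gt0.
          have n1 : narr B h j = B h j := @narr_pos _ _ _ _ bhj.
          have n2 : narr B j k = B j k := @narr_pos _ _ _ _ xpos.
          have n3 : narr B k j = 0 by apply: narr_npos; rewrite (hB k j) oppr_le0 ltW.
          move: Cle; rewrite (Ch h hf) n1 n2 n3; nia.
        case: (pj _ _ (cycB h hf (or_introl (conj _ (conj xpos _))))).
        * by rewrite (hB h j) oppr_gt0.
        * by rewrite (hB k h) oppr_gt0.
        move=> _ _ _ _ [[a _]|[a _]]; rewrite -/C in a; first by move: a; rewrite Chj (hB h j) opprK ltNge ltW.
        by move: Cle; rewrite leNgt a.
      have := pk _ _ (cycC h hf (or_intror (conj _ (conj Chk _)))).
      rewrite Cjh oppr_gt0 bneg Ckj (hB k j) opprK xpos => /(_ isT isT).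
      move=> [_ _ _ _ [[_ [_ a]]|[_ [_ a]]]]; rewrite -/D in a.
        by rewrite (hDq j h) oppr_lt0.
      by move: a; rewrite Dkj Ckj (hB k j) opprK oppr_gt0 ltNge ltW.
    + move=> nn; rewrite (Dj h hf) e1 e2 mul0r addr0 Cjh; nia.
  left; split => //.
    by exists h0 => //; rewrite lt_eqF ?key.
  by move=> f ff; rewrite ltW ?key.
- have e1 : narr C k j = 0 by apply: narr_npos; rewrite Ckj (hB k j) opprK ltW.
  have e2 : narr C j k = - B j k by rewrite narr_pos Cjk // oppr_gt0.
  have key h : h \in fr -> 0 < D j h.
    move=> hf; have [hj hk] := frne h hf.
    have := @narr_ge0 _ C k h.
    case: (ltgtP (B j h) 0) => [bneg|bpos|/eqP e]; last by move: (bjh h hf); rewrite e.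
    + move=> nn; rewrite (Dj h hf) e1 e2 mulr0 subr0 Cjh; nia.
    + move=> _.
      have Ckh : 0 < C k h.
        rewrite ltNge; apply/negP => Cle.
        have bkh : B k h < 0.
          have eCkh : C k h = B k h + narr B k j * narr B j h - narr B h j * narr B j k.
            by rewrite /C muO // eq_sym.
          have bkj : 0 < B k j by rewrite (hB k j) oppr_gt0.
          have n1 : narr B k j = B k j := @narr_pos _ _ _ _ bkj.
          have n2 : narr B j h = B j h := @narr_pos _ _ _ _ bpos.
          have n3 : narr B h j = 0 by apply: narr_npos; rewrite (hB h j) oppr_le0 ltW.
          move: Cle; rewrite eCkh n1 n2 n3 (hB k j); nia.
        case: (pj _ _ (cycB h hf (or_intror (conj _ (conj _ bpos))))).
        * by rewrite (hB h k) oppr_gt0.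
        * by rewrite (hB k j) oppr_gt0.
        move=> _ _ _ _ [[_ [_ a]]|[_ [_ a]]]; rewrite -/C in a; first by move: Cle; rewrite leNgt a.
        by move: a; rewrite Cjh oppr_gt0 ltNge ltW.
      have := pk _ _ (cycC h hf (or_introl (conj _ (conj Ckh _)))).
      rewrite Cjk oppr_gt0 xneg Chj (hB h j) opprK bpos => /(_ isT isT).
      move=> [_ _ _ _ [[a _]|[a _]]]; rewrite -/D in a => //.
      by move: a; rewrite Djk Cjk opprK ltNge ltW.
  right; split => //.
    by exists h0 => //; rewrite gt_eqF ?key.
  by move=> f ff; rewrite ltW ?key.
Qed.
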